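(* Let $p\in(1,\infty)$ and let $G=(X,b,m,0)$ be a locally finite, $p$-hyperbolic model graph with respect to $x_0\in X$ (with potential $c=0$). Suppose that the curvature ratio $\kappa(r)=k_+(r)/k_-(r)>0$ is constant, equal to some $\kappa>1$, for all $r>r_0$, for some $r_0\in\mathbb{N}_0$. Then the Green's function $g$ with pole $x_0$ is radial and $$g(r)=\frac{1}{(\kappa^{1/(p-1)}-1)\,\partial B(r-1)^{1/(p-1)}},\qquad r>r_0,$$ where $g(r)$ denotes the value of $g$ on $S_r$.
   Context: Weighted graph $G=(X,b,m,c)$: $X$ countably infinite; $b$ symmetric, nonnegative, zero on the diagonal, $\sum_yb(x,y)<\infty$; $m>0$; $c\ge0$; $x\sim y$ iff $b(x,y)>0$; $X$ connected; locally finite: each vertex has finitely many neighbours. $\mathcal{E}_p(f)=\frac12\sum_{x,y}b(x,y)|f(x)-f(y)|^p+\sum_xc(x)|f(x)|^p$; $p$-hyperbolic means $\inf\{\mathcal{E}_p(\varphi):\varphi\text{ finitely supported},\varphi\ge1\text{ on }K\}>0$ for some finite $K$. $d$ is the combinatorial graph distance, $S_r=\{x:d(x_0,x)=r\}$, $\partial B(r)=\sum_{x\in S_r,y\in S_{r+1}}b(x,y)$. $k_\pm(x)=\frac1{m(x)}\sum_{y\sim x,\,d(x_0,y)=d(x_0,x)\pm1}b(x,y)$; $G$ is a model graph with respect to $x_0$ if $k_\pm$ and $c/m$ are constant on each sphere $S_r$, and $k_\pm(r)$ denotes this value. $a^{\langle p-1\rangle}=|a|^{p-2}a$, $\Delta_pf(x)=\frac1{m(x)}\sum_yb(x,y)(f(x)-f(y))^{\langle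 p-1\rangle}$. The Green's function with pole $x_0$ is the minimal positive solution $g$ of $\Delta_pg=\frac1m\mathds{1}_{x_0}$ on $X$. *)

(* Defs.v *)
From Stdlib Require Import Reals Lra List ClassicalEpsilon.
From Coquelicot Require Import Coquelicot.
Open Scope R_scope.

(* The countably infinite vertex set X is identified with nat.
   A graph is given by b : nat -> nat -> R (edge weights), m (vertex measure),
   c (potential). *)

(* a^q for a >= 0 and real q > 0, with the convention 0^q = 0. *)
Definition rpow (a q : R) : R := if Req_EM_T a 0 then 0 else Rpower a q.

Definition absp (a q : R) : R := rpow (Rabs a) q.

(* a^<q> := |a|^(q-1) a = sgn(a) |a|^q ; used as a^<p-1> *)
Definition sgnpow (a q : R) : R :=
  if Rle_dec 0 a then rpow a q else - rpow (- a) q.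

Inductive walk (b : nat -> nat -> R) : nat -> nat -> nat -> Prop :=
| walk_nil : forall x, walk b x x 0
| walk_cons : forall x y z n, 0 < b x y -> walk b y z n -> walk b x z (S n).

Definition is_dist (b : nat -> nat -> R) (x y : nat) (n : nat) : Prop :=
  walk b x y n /\ forall k, (k < n)%nat -> ~ walk b x y k.

Definition gdist (b : nat -> nat -> R) (x y : nat) : nat :=
  epsilon (inhabits 0%nat) (fun n => is_dist b x y n).

Definition connected (b : nat -> nat -> R) : Prop :=
  forall x y, exists n, walk b x y n.

Definition locally_finite (b : nat -> nat -> R) : Prop :=
  forall x, exists l : list nat, forall y, 0 < b x y -> In y l.

Definition weighted_graph (b : nat -> nat -> R) (m c : nat -> R) : Prop :=
  (forall x y, b x y = b y x) /\
  (forall x y, 0 <= b x y) /\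
  (forall x, b x x = 0) /\
  (forall x, ex_series (fun y => b x y)) /\
  (forall x, 0 < m x) /\
  (forall x, 0 <= c x) /\
  connected b /\ locally_finite b.

(* All sums below are over neighbourhoods / finitely many nonzero terms
   (local finiteness, finite support), so Coquelicot's Series is the
   genuine (finite) sum. *)

Definition energy (p : R) (b : nat -> nat -> R) (c : nat -> R) (phi : nat -> R) : R :=
  / 2 * Series (fun x => Series (fun y => b x y * absp (phi x - phi y) p))
  + Series (fun x => c x * absp (phi x) p).

Definition finitely_supported (phi : nat -> R) : Prop :=
  exists N, forall x, (N <= x)%nat -> phi x = 0.

Definition p_hyperbolic (p : R) (b : nat -> nat -> R) (c : nat -> R) : Prop :=
  exists K : list nat, exists eps, 0 < eps /\
    forall phi, finitely_supported phi -> (forall x, In x K -> 1 <= phi x) ->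
      eps <= energy p b c phi.

Definition kplus (b : nat -> nat -> R) (m : nat -> R) (x0 x : nat) : R :=
  / m x * Series (fun y =>
    if Nat.eq_dec (gdist b x0 y) (S (gdist b x0 x)) then b x y else 0).

Definition kminus (b : nat -> nat -> R) (m : nat -> R) (x0 x : nat) : R :=
  / m x * Series (fun y =>
    if Nat.eq_dec (S (gdist b x0 y)) (gdist b x0 x) then b x y else 0).

Definition model_graph (b : nat -> nat -> R) (m c : nat -> R) (x0 : nat) : Prop :=
  forall x y, gdist b x0 x = gdist b x0 y ->
    kplus b m x0 x = kplus b m x0 y /\ kminus b m x0 x = kminus b m x0 y /\
    c x / m x = c y / m y.

Definition dB (b : nat -> nat -> R) (x0 r : nat) : R :=
  Series (fun x => if Nat.eq_dec (gdist b x0 x) r then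
    Series (fun y => if Nat.eq_dec (gdist b x0 y) (S r) then b x y else 0)
  else 0).

Definition plap (p : R) (b : nat -> nat -> R) (m : nat -> R) (f : nat -> R) (x : nat) : R :=
  / m x * Series (fun y => b x y * sgnpow (f x - f y) (p - 1)).

Definition green_eq (p : R) (b : nat -> nat -> R) (m : nat -> R) (x0 : nat) (h : nat -> R) : Prop :=
  forall x, plap p b m h x = (if Nat.eqb x x0 then / m x else 0).

Definition is_green (p : R) (b : nat -> nat -> R) (m : nat -> R) (x0 : nat) (g : nat -> R) : Prop :=
  (forall x, 0 < g x) /\ green_eq p b m x0 g /\
  (forall h, (forall x, 0 < h x) -> green_eq p b m x0 h -> forall x, g x <= h x).

(* Main.v *)
Require Import Defs.
From Stdlib Require Import Reals Lra Lia List Classical ClassicalEpsilon Arith.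
From Coquelicot Require Import Coquelicot.
Open Scope R_scope.

Lemma walk_snoc b x y z n : walk b x y n -> 0 < b y z -> walk b x z (S n).
Proof.
  induction 1; intros Hb.
  - apply walk_cons with z; [exact Hb| apply walk_nil].
  - apply walk_cons with y; auto.
Qed.

Lemma walk_last b n : forall x z, walk b x z (S n) -> exists y, walk b x y n /\ 0 < b y z.
Proof.
  induction n; intros x z H; inversion H; subst.
  - inversion H4; subst. exists x. split; [constructor|auto].
  - destruct (IHn _ _ H4) as [y' [Hw Hb]]. exists y'. split; auto.
    apply walk_cons with y; auto.
Qed.

Lemma dist_exists_aux b x y : forall n, walk b x y n -> exists k, is_dist b x y k.
Proof.
  intro n. induction n as [n IH] using lt_wf_ind. intros Hw.
  destruct (classic (exists k, (k < n)%nat /\ walk b x y k)) as [[k [Hk Hw']]|Hn].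
  - exact (IH k Hk Hw').
  - exists n. split; auto. intros k Hk Hw'. apply Hn. eauto.
Qed.

Lemma gdist_spec b x0 x : connected b -> is_dist b x0 x (gdist b x0 x).
Proof.
  intros Hc. unfold gdist. apply epsilon_spec.
  destruct (Hc x0 x) as [n Hn]. exact (dist_exists_aux _ _ _ n Hn).
Qed.

Lemma gdist_le b x0 x n : connected b -> walk b x0 x n -> (gdist b x0 x <= n)%nat.
Proof.
  intros Hc Hw. destruct (gdist_spec b x0 x Hc) as [_ H].
  destruct (le_lt_dec (gdist b x0 x) n); auto. exfalso; exact (H n l Hw).
Qed.

Lemma gdist_walk b x0 x : connected b -> walk b x0 x (gdist b x0 x).
Proof. intros Hc. apply (gdist_spec b x0 x Hc). Qed.

Lemma gdist_edge b x0 x y : connected b -> 0 < b x y -> (gdist b x0 y <= S (gdist b x0 x))%nat.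
Proof.
  intros Hc Hb. apply gdist_le; auto. apply walk_snoc with x; auto. apply gdist_walk; auto.
Qed.

Lemma gdist_pred b x0 x n : connected b -> (forall u v, b u v = b v u) ->
  gdist b x0 x = S n -> exists y, 0 < b y x /\ gdist b x0 y = n.
Proof.
  intros Hc Hs Hd. pose proof (gdist_walk b x0 x Hc) as Hw. rewrite Hd in Hw.
  destruct (walk_last _ _ _ _ Hw) as [y [Hwy Hb]]. exists y. split; auto.
  pose proof (gdist_le _ _ _ _ Hc Hwy).
  pose proof (gdist_edge b x0 y x Hc Hb). lia.
Qed.

Lemma gdist_0 b x0 x : connected b -> gdist b x0 x = 0%nat -> x = x0.
Proof.
  intros Hc Hd. pose proof (gdist_walk b x0 x Hc) as Hw. rewrite Hd in Hw.
  inversion Hw; auto.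
Qed.

Lemma gdist_x0 b x0 : connected b -> gdist b x0 x0 = 0%nat.
Proof. intros Hc. pose proof (gdist_le b x0 x0 0 Hc (walk_nil b x0)). lia. Qed.

Lemma list_bound (l : list nat) : exists B, forall z, In z l -> (z < B)%nat.
Proof.
  induction l as [|a l [B HB]].
  - exists 0%nat. intros z [].
  - exists (Nat.max (S a) B). intros z [<-|Hz]; [lia|]. specialize (HB z Hz). lia.
Qed.

Lemma nb_bound b : locally_finite b -> forall N, exists B, forall y z,
  (y < N)%nat -> 0 < b y z -> (z < B)%nat.
Proof.
  intros Hl N. induction N as [|N [B HB]].
  - exists 0%nat. intros y z Hy. lia.
  - destruct (Hl N) as [l Hlist]. destruct (list_bound l) as [B' HB'].
    exists (Nat.max B B'). intros y z Hy Hb.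
    destruct (Nat.eq_dec y N) as [->|Hne].
    + specialize (HB' z (Hlist z Hb)). lia.
    + assert (y < N)%nat by lia. specialize (HB y z H Hb). lia.
Qed.

Lemma ball_bound b x0 : connected b -> (forall u v, b u v = b v u) -> locally_finite b ->
  forall R, exists N, forall x, (gdist b x0 x <= R)%nat -> (x < N)%nat.
Proof.
  intros Hc Hs Hl R. induction R as [|R [N HN]].
  - exists (S x0). intros x Hx. assert (gdist b x0 x = 0%nat) by lia.
    rewrite (gdist_0 b x0 x Hc H). lia.
  - destruct (nb_bound b Hl N) as [B HB]. exists (Nat.max N B). intros x Hx.
    destruct (Nat.eq_dec (gdist b x0 x) (S R)) as [He|Hne].
    + destruct (gdist_pred b x0 x R Hc Hs He) as [y [Hb Hy]].
      assert (y < N)%nat by (apply HN; lia). specialize (HB y x H Hb). lia.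
    + assert (x < N)%nat by (apply HN; lia). lia.
Qed.

Lemma sphere_nonempty b x0 : connected b -> (forall u v, b u v = b v u) -> locally_finite b ->
  forall r, exists x, gdist b x0 x = r.
Proof.
  intros Hc Hs Hl r. destruct (ball_bound b x0 Hc Hs Hl r) as [N HN].
  assert (Hg : (r < gdist b x0 N)%nat).
  { destruct (le_lt_dec (gdist b x0 N) r); auto. specialize (HN N l). lia. }
  assert (forall j z, gdist b x0 z = (r + j)%nat -> exists y, gdist b x0 y = r).
  { induction j; intros z Hz.
    - exists z. lia.
    - rewrite Nat.add_succ_r in Hz. destruct (gdist_pred b x0 z _ Hc Hs Hz) as [y [_ Hy]].
      eauto. }
  apply (H (gdist b x0 N - r)%nat N). lia.
Qed.

Fixpoint fsum (f : nat -> R) (N : nat) : R :=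
  match N with O => 0 | S n => fsum f n + f n end.

Lemma sum_n_fsum f n : sum_n f n = fsum f (S n).
Proof.
  induction n.
  - rewrite sum_O. simpl. lra.
  - rewrite sum_Sn, IHn. simpl. unfold plus. simpl. lra.
Qed.

Lemma fsum_series f N : (forall x, (N <= x)%nat -> f x = 0) -> Series f = fsum f N.
Proof.
  intros Hz. apply is_series_unique. unfold is_series.
  apply filterlim_ext_loc with (fun _ => fsum f N); [|apply filterlim_const].
  exists N. intros n Hn. rewrite sum_n_fsum.
  assert (forall k, fsum f (N + k) = fsum f N).
  { induction k. rewrite Nat.add_0_r; auto.
    rewrite Nat.add_succ_r. simpl. rewrite IHk, Hz; [lra|lia]. }
  replace (S n) with (N + (S n - N))%nat by lia. rewrite H; auto.
Qed.

Lemma fsum_ext f g N : (forall x, (x < N)%nat -> f x = g x) -> fsum f N = fsum g N.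
Proof. induction N; intros H; simpl; auto. rewrite IHN, H; auto. Qed.

Lemma fsum_plus f g N : fsum (fun x => f x + g x) N = fsum f N + fsum g N.
Proof. induction N; simpl; [lra|]. rewrite IHN. lra. Qed.

Lemma fsum_minus f g N : fsum (fun x => f x - g x) N = fsum f N - fsum g N.
Proof. induction N; simpl; [lra|]. rewrite IHN. lra. Qed.

Lemma fsum_scal c f N : fsum (fun x => c * f x) N = c * fsum f N.
Proof. induction N; simpl; [lra|]. rewrite IHN. lra. Qed.

Lemma fsum_zero N : fsum (fun _ => 0) N = 0.
Proof. induction N; simpl; [lra|]. rewrite IHN. lra. Qed.

Lemma fsum_switch F N M : fsum (fun x => fsum (fun y => F x y) M) N =
  fsum (fun y => fsum (fun x => F x y) N) M.
Proof.
  induction N; simpl.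
  - rewrite fsum_zero. auto.
  - rewrite IHN. rewrite <- fsum_plus. auto.
Qed.

Lemma fsum_nonneg f N : (forall x, (x < N)%nat -> 0 <= f x) -> 0 <= fsum f N.
Proof. induction N; intros H; simpl; [lra|]. assert (0 <= f N) by (apply H; lia).
  assert (0 <= fsum f N) by (apply IHN; intros; apply H; lia). lra. Qed.

Lemma fsum_ge_term f N i : (forall x, (x < N)%nat -> 0 <= f x) -> (i < N)%nat -> f i <= fsum f N.
Proof.
  induction N; intros H Hi; [lia|]. simpl.
  destruct (Nat.eq_dec i N) as [->|Hne].
  - assert (0 <= fsum f N) by (apply fsum_nonneg; intros; apply H; lia). lra.
  - assert (f i <= fsum f N) by (apply IHN; [intros; apply H; lia|lia]).
    assert (0 <= f N) by (apply H; lia). lra.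
Qed.

Lemma fsum_single f N i : (forall k, k <> i -> f k = 0) -> (i < N)%nat -> fsum f N = f i.
Proof.
  induction N; intros H Hi; [lia|]. simpl.
  destruct (Nat.eq_dec i N) as [->|Hne].
  - assert (fsum f N = fsum (fun _ => 0) N) by (apply fsum_ext; intros; apply H; lia).
    rewrite H0, fsum_zero. lra.
  - rewrite IHN; auto; [|lia]. rewrite (H N); auto. lra.
Qed.

Lemma fsum_zero_nonneg f N : (forall x, (x < N)%nat -> 0 <= f x) -> fsum f N = 0 ->
  forall x, (x < N)%nat -> f x = 0.
Proof.
  intros H H0 x Hx. pose proof (fsum_ge_term f N x H Hx). specialize (H x Hx). lra.
Qed.

Lemma Rpower_pos' x y : 0 < Rpower x y.
Proof. unfold Rpower. apply exp_pos. Qed.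

Lemma rpow_pos a e : 0 < a -> rpow a e = Rpower a e.
Proof. intros H. unfold rpow. destruct (Req_EM_T a 0); [lra|auto]. Qed.

Lemma sgnpow_pos a e : 0 < a -> sgnpow a e = Rpower a e.
Proof. intros H. unfold sgnpow. destruct (Rle_dec 0 a); [|lra]. apply rpow_pos; auto. Qed.

Lemma sgnpow_neg a e : a < 0 -> sgnpow a e = - Rpower (-a) e.
Proof. intros H. unfold sgnpow. destruct (Rle_dec 0 a); [lra|]. rewrite rpow_pos; auto. lra. Qed.

Lemma sgnpow_0 e : sgnpow 0 e = 0.
Proof. unfold sgnpow, rpow. destruct (Rle_dec 0 0); [|lra]. destruct (Req_EM_T 0 0); lra. Qed.

Lemma sgnpow_lt e a c : 0 < e -> a < c -> sgnpow a e < sgnpow c e.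
Proof.
  intros He Hac.
  destruct (Rtotal_order a 0) as [Ha|[Ha|Ha]]; destruct (Rtotal_order c 0) as [Hc|[Hc|Hc]];
    try lra; subst.
  - rewrite !sgnpow_neg; auto. assert (Rpower (-c) e < Rpower (-a) e)
      by (apply Rlt_Rpower_l; lra). lra.
  - rewrite sgnpow_neg, sgnpow_0; auto. pose proof (Rpower_pos' (-a) e). lra.
  - rewrite sgnpow_neg, sgnpow_pos; auto. pose proof (Rpower_pos' (-a) e).
    pose proof (Rpower_pos' c e). lra.
  - rewrite sgnpow_0, sgnpow_pos; auto. apply Rpower_pos'.
  - rewrite !sgnpow_pos; auto. apply Rlt_Rpower_l; lra.
Qed.

Lemma sgnpow_le e a c : 0 < e -> a <= c -> sgnpow a e <= sgnpow c e.
Proof. intros He [H|H]; [left; apply sgnpow_lt; auto| subst; lra]. Qed.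

Lemma sgnpow_inj e a c : 0 < e -> sgnpow a e = sgnpow c e -> a = c.
Proof.
  intros He H. destruct (Rtotal_order a c) as [Hl|[Hl|Hl]]; auto.
  - pose proof (sgnpow_lt e a c He Hl). lra.
  - pose proof (sgnpow_lt e c a He Hl). lra.
Qed.

Lemma dB_fsum b x0 r N : (forall x, (gdist b x0 x <= S r)%nat -> (x < N)%nat) ->
  dB b x0 r = fsum (fun z => if Nat.eq_dec (gdist b x0 z) r then
     fsum (fun y => if Nat.eq_dec (gdist b x0 y) (S r) then b z y else 0) N else 0) N.
Proof.
  intros HN. unfold dB.
  rewrite (Series_ext _ (fun z => if Nat.eq_dec (gdist b x0 z) r then
     fsum (fun y => if Nat.eq_dec (gdist b x0 y) (S r) then b z y else 0) N else 0)).
  - apply fsum_series. intros x Hx. destruct Nat.eq_dec; auto.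
    assert (x < N)%nat by (apply HN; lia). lia.
  - intros z. destruct Nat.eq_dec; auto. apply fsum_series.
    intros y Hy. destruct Nat.eq_dec; auto. assert (y < N)%nat by (apply HN; lia). lia.
Qed.

Lemma dB_pos b x0 r : connected b -> (forall u v, b u v = b v u) -> (forall u v, 0 <= b u v) ->
  locally_finite b -> 0 < dB b x0 r.
Proof.
  intros Hc Hs Hnn Hl.
  destruct (ball_bound b x0 Hc Hs Hl (S r)) as [N HN].
  rewrite (dB_fsum b x0 r N HN).
  destruct (sphere_nonempty b x0 Hc Hs Hl (S r)) as [y Hy].
  destruct (gdist_pred b x0 y r Hc Hs Hy) as [z [Hb Hz]].
  eapply Rlt_le_trans; [|apply fsum_ge_term with (i := z)].
  - destruct Nat.eq_dec; [|lia].
    eapply Rlt_le_trans; [|apply fsum_ge_term with (i := y)].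
    + destruct Nat.eq_dec; [exact Hb|lia].
    + intros; destruct Nat.eq_dec; auto; lra.
    + apply HN; lia.
  - intros x _. destruct Nat.eq_dec; [|lra]. apply fsum_nonneg. intros; destruct Nat.eq_dec; auto; lra.
  - apply HN; lia.
Qed.

Definition Msph b m x0 r := Series (fun z => if Nat.eq_dec (gdist b x0 z) r then m z else 0).

Lemma Dplus b m x0 r x : (forall x, 0 < m x) -> model_graph b m (fun _ => 0) x0 ->
  gdist b x0 x = r -> dB b x0 r = kplus b m x0 x * Msph b m x0 r.
Proof.
  intros Hm Hmod Hx. unfold dB, Msph. rewrite <- Series_scal_l. apply Series_ext. intros z.
  destruct Nat.eq_dec as [e|n]; [|lra].
  destruct (Hmod x z ltac:(lia)) as [Hk _]. rewrite Hk. unfold kplus.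
  rewrite e. specialize (Hm z). field. lra.
Qed.

Lemma Dminus b m x0 r x : connected b -> (forall u v, b u v = b v u) -> locally_finite b ->
  (forall x, 0 < m x) -> model_graph b m (fun _ => 0) x0 ->
  gdist b x0 x = S r -> dB b x0 r = kminus b m x0 x * Msph b m x0 (S r).
Proof.
  intros Hc Hs Hl Hm Hmod Hx.
  destruct (ball_bound b x0 Hc Hs Hl (S r)) as [N HN].
  rewrite (dB_fsum b x0 r N HN).
  unfold Msph. rewrite (fsum_series _ N).
  2:{ intros z Hz. destruct Nat.eq_dec; auto. assert (z < N)%nat by (apply HN; lia). lia. }
  rewrite <- fsum_scal.
  rewrite (fsum_ext _ (fun z => fsum (fun y => if Nat.eq_dec (gdist b x0 z) r then
     if Nat.eq_dec (gdist b x0 y) (S r) then b z y else 0 else 0) N)).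
  2:{ intros z _. destruct Nat.eq_dec; auto. rewrite fsum_zero; auto. }
  rewrite fsum_switch. apply fsum_ext. intros y _.
  destruct (Nat.eq_dec (gdist b x0 y) (S r)) as [e|n].
  - destruct (Hmod x y ltac:(lia)) as [_ [Hk _]]. rewrite Hk.
    assert (m y * kminus b m x0 y = fsum (fun z => if Nat.eq_dec (S (gdist b x0 z)) (gdist b x0 y)
       then b y z else 0) N).
    { unfold kminus. rewrite (fsum_series _ N).
      - specialize (Hm y). field. lra.
      - intros z Hz. destruct Nat.eq_dec; auto. assert (z < N)%nat by (apply HN; lia). lia. }
    transitivity (m y * kminus b m x0 y); [|lra]. rewrite H.
    apply fsum_ext. intros z _. rewrite (Hs z y).
    repeat destruct Nat.eq_dec; auto; lia.
  - rewrite Rmult_0_r. transitivity (fsum (fun _ => 0) N); [|apply fsum_zero].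
    apply fsum_ext. intros z _.
    repeat destruct Nat.eq_dec; auto; lia.
Qed.

Lemma E_pow p D : 1 < p -> 0 < D -> Rpower (Rpower D (- (1 / (p - 1)))) (p - 1) = / D.
Proof.
  intros Hp HD. rewrite Rpower_mult.
  replace (- (1 / (p - 1)) * (p - 1)) with (Ropp 1) by (field; lra).
  rewrite Rpower_Ropp, Rpower_1; auto.
Qed.

Lemma Msph_0 b m x0 : connected b -> Msph b m x0 0 = m x0.
Proof.
  intros Hc. unfold Msph. rewrite (fsum_series _ (S x0)).
  - rewrite (fsum_single _ _ x0).
    + destruct Nat.eq_dec; auto. rewrite gdist_x0 in n; auto. lia.
    + intros k Hk. destruct Nat.eq_dec; auto. exfalso. apply Hk. apply gdist_0 with b; auto.
    + lia.
  - intros x Hx. destruct Nat.eq_dec; auto. apply gdist_0 in e; auto. lia.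
Qed.

Lemma radial_green p b m x0 (h : nat -> R) : 1 < p -> weighted_graph b m (fun _ => 0) ->
  model_graph b m (fun _ => 0) x0 ->
  (forall r, h r - h (S r) = Rpower (dB b x0 r) (- (1 / (p - 1)))) ->
  green_eq p b m x0 (fun x => h (gdist b x0 x)).
Proof.
  intros Hp [Hs [Hnn [Hd [_ [Hm [_ [Hc Hl]]]]]]] Hmod Hh x.
  set (r := gdist b x0 x).
  destruct (ball_bound b x0 Hc Hs Hl (S r)) as [N HN].
  unfold plap. rewrite (fsum_series _ N).
  2:{ intros y Hy. destruct (Hnn x y) as [Hb|Hb]; [|rewrite <- Hb; lra].
      pose proof (gdist_edge b x0 x y Hc Hb). assert (y < N)%nat by (apply HN; lia). lia. }
  rewrite (fsum_ext _ (fun y => / dB b x0 r * (if Nat.eq_dec (gdist b x0 y) (S r) then b x y else 0)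
      - / dB b x0 (r - 1) * (if Nat.eq_dec (S (gdist b x0 y)) r then b x y else 0))).
  2:{ intros y _. fold r. destruct (Hnn x y) as [Hb|Hb].
      - pose proof (gdist_edge b x0 x y Hc Hb) as H1.
        rewrite Hs in Hb. pose proof (gdist_edge b x0 y x Hc Hb) as H2. rewrite Hs in Hb.
        fold r in H1, H2.
        destruct (Nat.eq_dec (gdist b x0 y) (S r)) as [e|n].
        + destruct Nat.eq_dec; [lia|]. rewrite e.
          pose proof (Hh r) as Hr. rewrite Hr.
          rewrite sgnpow_pos by apply Rpower_pos'. rewrite E_pow; auto.
          2: apply dB_pos; auto. lra.
        + destruct (Nat.eq_dec (S (gdist b x0 y)) r) as [e'|n'].
          * pose proof (Hh (gdist b x0 y)) as Hr. rewrite e' in Hr.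
            replace (h r - h (gdist b x0 y)) with (- Rpower (dB b x0 (gdist b x0 y)) (- (1 / (p - 1))))
              by lra.
            rewrite sgnpow_neg. 2: pose proof (Rpower_pos' (dB b x0 (gdist b x0 y)) (- (1 / (p - 1)))); lra.
            rewrite Ropp_involutive, E_pow; auto. 2: apply dB_pos; auto.
            replace (r - 1)%nat with (gdist b x0 y) by lia. lra.
          * assert (gdist b x0 y = r) as e by lia. rewrite e.
            replace (h r - h r) with 0 by lra. rewrite sgnpow_0. lra.
      - rewrite <- Hb. repeat destruct Nat.eq_dec; lra. }
  rewrite fsum_minus, !fsum_scal.
  assert (E1 : fsum (fun y => if Nat.eq_dec (gdist b x0 y) (S r) then b x y else 0) N
     = m x * kplus b m x0 x).
  { unfold kplus. rewrite (fsum_series _ N). fold r. specialize (Hm x). field. lra.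
    intros y Hy. destruct Nat.eq_dec; auto. assert (y < N)%nat by (apply HN; lia). lia. }
  assert (E2 : fsum (fun y => if Nat.eq_dec (S (gdist b x0 y)) r then b x y else 0) N
     = m x * kminus b m x0 x).
  { unfold kminus. rewrite (fsum_series _ N). fold r. specialize (Hm x). field. lra.
    intros y Hy. destruct Nat.eq_dec; auto. assert (y < N)%nat by (apply HN; lia). lia. }
  rewrite E1, E2.
  assert (Hmx := Hm x).
  destruct (Nat.eqb_spec x x0) as [->|Hne].
  - assert (r = 0%nat) by (unfold r; apply gdist_x0; auto).
    assert (kminus b m x0 x0 = 0).
    { unfold kminus. rewrite (Series_ext _ (fun _ => 0 * 0)).
      - rewrite Series_scal_l. lra.
      - intros y. fold r. destruct Nat.eq_dec; [lia|lra]. }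
    rewrite H0. rewrite (Dplus b m x0 r x0); auto. rewrite H, Msph_0; auto.
    assert (0 < kplus b m x0 x0).
    { pose proof (dB_pos b x0 0 Hc Hs Hnn Hl) as Hp0.
      rewrite (Dplus b m x0 0 x0) in Hp0; auto. rewrite Msph_0 in Hp0; auto.
      destruct (Rtotal_order (kplus b m x0 x0) 0) as [Hk|[Hk|Hk]]; auto; nra. }
    rewrite !Rmult_0_r, Rminus_0_r. field. split; lra.
  - assert (Hr : r <> 0%nat) by (intro H; apply Hne; apply gdist_0 with b; auto).
    destruct r as [|r'] eqn:Er; [lia|]. replace (S r' - 1)%nat with r' by lia.
    rewrite (Dplus b m x0 (S r') x); auto.
    rewrite (Dminus b m x0 r' x); auto.
    pose proof (dB_pos b x0 r' Hc Hs Hnn Hl) as Hp0.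
    rewrite (Dminus b m x0 r' x) in Hp0; auto.
    pose proof (dB_pos b x0 (S r') Hc Hs Hnn Hl) as Hp1.
    rewrite (Dplus b m x0 (S r') x) in Hp1; auto.
    assert (kplus b m x0 x <> 0) by (intro E; rewrite E in Hp1; lra).
    assert (kminus b m x0 x <> 0) by (intro E; rewrite E in Hp0; lra).
    assert (Msph b m x0 (S r') <> 0) by (intro E; rewrite E in Hp0; lra).
    field. repeat split; lra.
Qed.

Lemma fsum_single' f N i : (forall k, (k < N)%nat -> k <> i -> f k = 0) -> (i < N)%nat -> fsum f N = f i.
Proof.
  intros H Hi. rewrite (fsum_ext f (fun k => if Nat.eq_dec k i then f k else 0)).
  - rewrite (fsum_single _ _ i); auto.
    + destruct Nat.eq_dec; [reflexivity|lia].
    + intros k Hk. destruct Nat.eq_dec; [lia|reflexivity].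
  - intros x Hx. destruct Nat.eq_dec; subst; auto.
Qed.

Definition Hf (E : nat -> R) (K : R) (r0 r : nat) : R :=
  if Nat.ltb r0 r then E (r - 1)%nat / (K - 1)
  else E r0 / (K - 1) + fsum (fun k => if Nat.leb r k then E k else 0) (S r0).

Section HfProps.
Lemma Hf_step E K r0 : 1 < K -> (forall r, (r0 < S r)%nat -> E (S r) * K = E r) ->
  forall r, Hf E K r0 r - Hf E K r0 (S r) = E r.
Proof.
  intros HK HE r. unfold Hf.
  destruct (Nat.ltb_spec r0 r) as [H1|H1]; destruct (Nat.ltb_spec r0 (S r)) as [H2|H2]; try lia.
  - replace (S r - 1)%nat with r by lia. specialize (HE (r - 1)%nat ltac:(lia)).
    replace (S (r - 1)) with r in HE by lia. rewrite <- HE. field. lra.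
  - assert (r = r0) by lia. subst. replace (S r0 - 1)%nat with r0 by lia.
    rewrite (fsum_single' _ _ r0).
    + destruct (Nat.leb_spec r0 r0); [|lia]. field. lra.
    + intros k Hk Hne. destruct (Nat.leb_spec r0 k); auto. lia.
    + lia.
  - rewrite Rplus_comm. unfold Rminus. rewrite Rplus_assoc, Ropp_plus_distr.
    rewrite <- (Rplus_assoc (E r0 / (K - 1))), Rplus_opp_r, Rplus_0_l.
    fold (fsum (fun k => if Nat.leb r k then E k else 0) (S r0) -
          fsum (fun k => if Nat.leb (S r) k then E k else 0) (S r0)).
    rewrite <- fsum_minus. rewrite (fsum_single' _ _ r).
    + destruct (Nat.leb_spec r r); [|lia]. destruct (Nat.leb_spec (S r) r); [lia|]. lra.
    + intros k Hk Hne. destruct (Nat.leb_spec r k); destruct (Nat.leb_spec (S r) k); try lra; lia.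
    + lia.
Qed.

Lemma Hf_pos E K r0 : 1 < K -> (forall r, 0 < E r) -> forall r, 0 < Hf E K r0 r.
Proof.
  intros HK HE r. unfold Hf. destruct (Nat.ltb r0 r).
  - apply Rdiv_lt_0_compat; auto. lra.
  - assert (0 < E r0 / (K - 1)) by (apply Rdiv_lt_0_compat; auto; lra).
    assert (0 <= fsum (fun k => if Nat.leb r k then E k else 0) (S r0)).
    { apply fsum_nonneg. intros x _. destruct Nat.leb; [left; auto|lra]. }
    lra.
Qed.

Lemma Hf_small E K r0 : 1 < K -> (forall r, 0 < E r) ->
  (forall r, (r0 < S r)%nat -> E (S r) * K = E r) ->
  forall eps, 0 < eps -> exists R, forall r, (R <= r)%nat -> Hf E K r0 r < eps.
Proof.
  intros HK HEp HE eps Heps.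
  assert (Hj : forall j, E (r0 + j)%nat * K ^ j = E r0).
  { induction j. simpl. rewrite Nat.add_0_r. lra.
    rewrite <- IHj. rewrite Nat.add_succ_r. simpl.
    rewrite <- (HE (r0 + j)%nat) by lia. ring. }
  destruct (Pow_x_infinity K ltac:(rewrite Rabs_right; lra) (E r0 / (eps * (K - 1)) + 1)) as [J HJ].
  exists (S (r0 + J)). intros r Hr. unfold Hf.
  destruct (Nat.ltb_spec r0 r); [|lia].
  set (j := (r - 1 - r0)%nat).
  replace (r - 1)%nat with (r0 + j)%nat by (unfold j; lia).
  specialize (HJ j ltac:(unfold j; lia)). specialize (Hj j).
  assert (0 < K ^ j) by (apply pow_lt; lra).
  rewrite Rabs_right in HJ by lra.
  assert (E (r0 + j)%nat = E r0 / K ^ j) as ->. { rewrite <- Hj. field. lra. }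
  assert (0 < E r0) by auto.
  assert (E r0 / (eps * (K - 1)) * (eps * (K - 1)) = E r0) by (field; lra).
  apply Rmult_lt_reg_r with (K ^ j * (K - 1)). nra.
  replace (E r0 / K ^ j / (K - 1) * (K ^ j * (K - 1))) with (E r0) by (field; lra).
  set (t := E r0 / (eps * (K - 1))) in *.
  assert (0 < eps * (K - 1)) by (apply Rmult_lt_0_compat; lra).
  assert (t * (eps * (K - 1)) < K ^ j * (eps * (K - 1))) by (apply Rmult_lt_compat_r; lra).
  nra.
Qed.
End HfProps.

Lemma max_prop p b m x0 f g x : 1 < p -> weighted_graph b m (fun _ => 0) ->
  green_eq p b m x0 f -> green_eq p b m x0 g ->
  (forall y, f y - g y <= f x - g x) ->
  forall y, 0 < b x y -> f y - g y = f x - g x.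
Proof.
  intros Hp [Hs [Hnn [Hd [_ [Hm [_ [Hc Hl]]]]]]] Hf Hg Hmax.
  destruct (nb_bound b Hl (S x)) as [N HN].
  assert (Hz : forall (F : nat -> R), forall y, (N <= y)%nat -> b x y * F y = 0).
  { intros F y Hy. destruct (Hnn x y) as [Hb|Hb].
    - specialize (HN x y ltac:(lia) Hb). lia.
    - rewrite <- Hb. lra. }
  assert (Heq : plap p b m f x = plap p b m g x) by (rewrite Hf, Hg; auto).
  unfold plap in Heq. specialize (Hm x).
  apply Rmult_eq_reg_l in Heq; [|apply Rinv_neq_0_compat; lra].
  rewrite (fsum_series _ N) in Heq by (intros; apply (Hz (fun y => sgnpow (f x - f y) (p - 1))); auto).
  rewrite (fsum_series _ N) in Heq by (intros; apply (Hz (fun y => sgnpow (g x - g y) (p - 1))); auto).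
  assert (H0 : fsum (fun y => b x y * sgnpow (f x - f y) (p - 1) - b x y * sgnpow (g x - g y) (p - 1)) N = 0)
    by (rewrite fsum_minus; lra).
  assert (Hnn' : forall y, 0 <= b x y * sgnpow (f x - f y) (p - 1) - b x y * sgnpow (g x - g y) (p - 1)).
  { intros y. rewrite <- Rmult_minus_distr_l. apply Rmult_le_pos; auto.
    assert (sgnpow (g x - g y) (p - 1) <= sgnpow (f x - f y) (p - 1)).
    { apply sgnpow_le; [lra|]. specialize (Hmax y). lra. }
    lra. }
  intros y Hb.
  assert (y < N)%nat by (apply (HN x); auto).
  pose proof (fsum_zero_nonneg _ N (fun y _ => Hnn' y) H0 y H) as Hy.
  cbv beta in Hy. rewrite <- Rmult_minus_distr_l in Hy.
  apply Rmult_integral in Hy. destruct Hy as [Hy|Hy]; [lra|].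
  assert (sgnpow (f x - f y) (p - 1) = sgnpow (g x - g y) (p - 1)) by lra.
  apply sgnpow_inj in H1; lra.
Qed.

Lemma walk_prop p b m x0 f g Mx : 1 < p -> weighted_graph b m (fun _ => 0) ->
  green_eq p b m x0 f -> green_eq p b m x0 g ->
  (forall y, f y - g y <= Mx) ->
  forall x z n, walk b x z n -> f x - g x = Mx -> f z - g z = Mx.
Proof.
  intros Hp Hw Hf Hg Hmax x z n Hwk. induction Hwk; intros Hx; auto.
  apply IHHwk. rewrite (max_prop p b m x0 f g x Hp Hw Hf Hg); auto.
  intros; rewrite Hx; auto.
Qed.

Lemma finite_max (w : nat -> R) N : (0 < N)%nat -> exists xm, (xm < N)%nat /\ forall y, (y < N)%nat -> w y <= w xm.
Proof.
  induction N; intros HN; [lia|].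
  destruct (Nat.eq_dec N 0) as [->|Hne].
  - exists 0%nat. split; [lia|]. intros y Hy. replace y with 0%nat by lia. lra.
  - destruct (IHN ltac:(lia)) as [xm [Hxm Hmax]].
    destruct (Rle_dec (w N) (w xm)).
    + exists xm. split; [lia|]. intros y Hy. destruct (Nat.eq_dec y N) as [->|]; auto. apply Hmax; lia.
    + exists N. split; [lia|]. intros y Hy. destruct (Nat.eq_dec y N) as [->|]; [lra|].
      specialize (Hmax y ltac:(lia)). lra.
Qed.

Lemma comparison p b m x0 (h : nat -> R) g : 1 < p -> weighted_graph b m (fun _ => 0) ->
  green_eq p b m x0 (fun x => h (gdist b x0 x)) -> green_eq p b m x0 g ->
  (forall x, 0 < g x) ->
  (forall eps, 0 < eps -> exists R, forall r, (R <= r)%nat -> h r < eps) ->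
  forall x, h (gdist b x0 x) <= g x.
Proof.
  intros Hp Hw Hf Hg Hgp Hsmall x1.
  pose proof Hw as [Hs [Hnn [Hd [_ [Hm [_ [Hc Hl]]]]]]].
  destruct (Rle_dec (h (gdist b x0 x1)) (g x1)) as [|Hn]; auto. exfalso.
  set (s := h (gdist b x0 x1) - g x1).
  assert (Hs0 : 0 < s) by (unfold s; lra).
  destruct (Hsmall s Hs0) as [R HR].
  destruct (ball_bound b x0 Hc Hs Hl (Nat.max R (gdist b x0 x1))) as [N HN].
  assert (Hx1 : (x1 < N)%nat) by (apply HN; lia).
  set (w := fun y => h (gdist b x0 y) - g y).
  destruct (finite_max w N ltac:(lia)) as [xm [Hxm Hmax]].
  assert (Hout : forall y, (N <= y)%nat -> w y < s).
  { intros y Hy. assert (Hd' : (R <= gdist b x0 y)%nat).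
    { destruct (le_lt_dec R (gdist b x0 y)); auto. assert (y < N)%nat by (apply HN; lia). lia. }
    specialize (HR _ Hd'). specialize (Hgp y). unfold w. lra. }
  assert (Hs1 : s <= w xm) by (apply (Rle_trans _ (w x1)); [unfold w, s; lra| apply Hmax; auto]).
  assert (Hglob : forall y, w y <= w xm).
  { intros y. destruct (le_lt_dec N y) as [Hy|Hy]; [specialize (Hout y Hy); lra| apply Hmax; auto]. }
  destruct (Hc xm N) as [n Hwk].
  pose proof (walk_prop p b m x0 (fun x => h (gdist b x0 x)) g (w xm) Hp Hw Hf Hg Hglob xm N n Hwk
     ltac:(unfold w; reflexivity)) as HN'.
  specialize (Hout N (le_n N)). unfold w in Hout. lra.
Qed.

Theorem proposition4p9 (p : R) (b : nat -> nat -> R) (m : nat -> R) (x0 : nat)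
  (r0 : nat) (kappa : R) (g : nat -> R) :
  1 < p ->
  weighted_graph b m (fun _ => 0) ->
  model_graph b m (fun _ => 0) x0 ->
  p_hyperbolic p b (fun _ => 0) ->
  1 < kappa ->
  (forall x, (r0 < gdist b x0 x)%nat -> kplus b m x0 x / kminus b m x0 x = kappa) ->
  is_green p b m x0 g ->
  (forall x y, gdist b x0 x = gdist b x0 y -> g x = g y) /\
  (forall x, (r0 < gdist b x0 x)%nat ->
     g x = 1 / ((Rpower kappa (1 / (p - 1)) - 1)
                * Rpower (dB b x0 (gdist b x0 x - 1)) (1 / (p - 1)))).
Proof.
  intros Hp Hw Hmod _ Hk Hrat [Hgp [Hgg Hmin]].
  pose proof Hw as [Hs [Hnn [Hd [_ [Hm [_ [Hc Hl]]]]]]].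
  set (q := 1 / (p - 1)).
  assert (Hq : 0 < q) by (unfold q; apply Rdiv_lt_0_compat; lra).
  set (K := Rpower kappa q).
  assert (HK : 1 < K).
  { unfold K. rewrite <- (Rpower_O kappa) by lra. apply Rpower_lt; lra. }
  set (E := fun k => Rpower (dB b x0 k) (- q)).
  assert (Hratio : forall r, (r0 < S r)%nat -> dB b x0 (S r) = kappa * dB b x0 r).
  { intros r Hr. destruct (sphere_nonempty b x0 Hc Hs Hl (S r)) as [x Hx].
    rewrite (Dplus b m x0 (S r) x), (Dminus b m x0 r x); auto.
    specialize (Hrat x ltac:(lia)).
    destruct (Req_dec (kminus b m x0 x) 0) as [E0|E0].
    - rewrite E0 in Hrat. unfold Rdiv in Hrat. rewrite Rinv_0 in Hrat. lra.
    - rewrite <- Hrat. field. auto. }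
  assert (HE : forall r, (r0 < S r)%nat -> E (S r) * K = E r).
  { intros r Hr. unfold E. rewrite Hratio by auto.
    rewrite <- Rpower_mult_distr; [|lra|apply dB_pos; auto].
    unfold K. rewrite Rpower_Ropp. field.
    pose proof (Rpower_pos' kappa q). lra. }
  assert (HEp : forall r, 0 < E r) by (intros; apply Rpower_pos').
  assert (Hstep := Hf_step E K r0 HK HE).
  assert (Hgreen : green_eq p b m x0 (fun x => Hf E K r0 (gdist b x0 x))).
  { apply radial_green; auto. }
  assert (Heq : forall x, g x = Hf E K r0 (gdist b x0 x)).
  { intros x. apply Rle_antisym.
    - apply (Hmin (fun y => Hf E K r0 (gdist b x0 y))); auto. intros; apply Hf_pos; auto.
    - apply (comparison p b m x0 (Hf E K r0) g); auto.
      apply Hf_small; auto. }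
  split.
  - intros x y Hxy. rewrite !Heq, Hxy. auto.
  - intros x Hx. rewrite Heq. unfold Hf.
    destruct (Nat.ltb_spec r0 (gdist b x0 x)); [|lia].
    unfold E. rewrite Rpower_Ropp. fold K.
    pose proof (Rpower_pos' (dB b x0 (gdist b x0 x - 1)) q).
    field. lra.
Qed.
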